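(* Let $G=\mathbb Z\wr\mathbb Z=\langle a\rangle\wr\langle b\rangle$. Then $\mathrm{pw}(G,\{a,b\})\le 3$.
   Context: $a$ generates the first (base) infinite cyclic factor and $b$ the second (acting) infinite cyclic factor of the restricted wreath product. A palindrome in a group generated by $X$ is an element represented by a reduced word in $X^{\pm1}$ reading the same forwards and backwards; $l_{\mathcal P}(g)$ is the minimal number of palindromes whose product is $g$; $\mathrm{pw}(G,X)=\sup_{g\in G}l_{\mathcal P}(g)$. *)

(* Defs.v *)
(* The restricted wreath product Z wr Z = <a> wr <b>,
   modelled concretely: an element is a pair (f, n) standing for f * b^n,
   where f : int -> int is a finitely supported function (an element of the
   base group  (+)_{i in Z} <a>, with f i the exponent of the copy of a at
   position i) and n : int the exponent of b.  Multiplication: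
     (f, n) * (g, m) = (x |-> f x + g (x - n), n + m),
   i.e. b^n acts on the base by shifting. *)
From mathcomp Require Import all_boot all_order all_algebra.
Set Implicit Arguments. Unset Strict Implicit. Unset Printing Implicit Defensive.
Import Order.TTheory GRing.Theory Num.Theory.
Local Open Scope ring_scope.

Definition WZ : Type := ((int -> int) * int)%type.

Definition in_WZ (g : WZ) : Prop :=
  exists N : nat, forall z : int, (N < `|z|)%N -> g.1 z = 0.

Definition eqWZ (g h : WZ) : Prop := (forall z, g.1 z = h.1 z) /\ g.2 = h.2.

Definition oneWZ : WZ := (fun _ => 0, 0).

Definition mulWZ (g h : WZ) : WZ :=
  (fun x => g.1 x + h.1 (x - g.2), g.2 + h.2).

Inductive letter := La | LaI | Lb | LbI.

Definition inv_letter (l : letter) : letter :=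
  match l with La => LaI | LaI => La | Lb => LbI | LbI => Lb end.

Definition letter_val (l : letter) : WZ :=
  match l with
  | La => (fun x => if x == 0 then 1 else 0, 0)
  | LaI => (fun x => if x == 0 then -1 else 0, 0)
  | Lb => (fun _ => 0, 1)
  | LbI => (fun _ => 0, -1)
  end.

Definition eval_word (w : seq letter) : WZ :=
  foldr (fun l acc => mulWZ (letter_val l) acc) oneWZ w.

Definition reduced (w : seq letter) : Prop :=
  forall i : nat, (i.+1 < size w)%N -> nth La w i.+1 <> inv_letter (nth La w i).

Definition is_palindrome (g : WZ) : Prop :=
  exists w : seq letter, reduced w /\ rev w = w /\ eqWZ (eval_word w) g.

Definition pal_len_le (k : nat) (g : WZ) : Prop :=
  exists ps : seq WZ, (size ps <= k)%N /\ (forall i : nat, (i < size ps)%N -> is_palindrome (nth oneWZ ps i))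
    /\ eqWZ (foldr mulWZ oneWZ ps) g.

Definition pw_le (k : nat) : Prop := forall g : WZ, in_WZ g -> pal_len_le k g.

(* Main.v *)
Require Import Defs.
From HB Require Import structures.
From mathcomp Require Import all_boot all_order all_algebra.
From mathcomp Require Import zify ring.
From Stdlib Require Import FunctionalExtensionality.
Set Implicit Arguments. Unset Strict Implicit. Unset Printing Implicit Defensive.
Import Order.TTheory GRing.Theory Num.Theory.
Local Open Scope ring_scope.

Definition letter_eqb (x y : letter) : bool :=
  match x, y with La, La | LaI, LaI | Lb, Lb | LbI, LbI => true | _, _ => false end.
Lemma letter_eqP : Equality.axiom letter_eqb.
Proof. by case; case; constructor. Qed.
HB.instance Definition _ := hasDecEq.Build letter letter_eqP.

Lemma mul1W g : mulWZ oneWZ g = g.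
Proof.
case: g => f n; rewrite /mulWZ /oneWZ /=; congr pair; last by rewrite add0r.
by apply: functional_extensionality => x; rewrite subr0 add0r.
Qed.

Lemma mulW1 g : mulWZ g oneWZ = g.
Proof.
case: g => f n; rewrite /mulWZ /oneWZ /=; congr pair; last by rewrite addr0.
by apply: functional_extensionality => x; rewrite addr0.
Qed.

Lemma mulWA g h k : mulWZ g (mulWZ h k) = mulWZ (mulWZ g h) k.
Proof.
rewrite /mulWZ /=; congr pair; last by rewrite addrA.
by apply: functional_extensionality => x; rewrite addrA opprD addrA.
Qed.

Lemma mul_inv l : mulWZ (letter_val l) (letter_val (inv_letter l)) = oneWZ.
Proof.
rewrite /mulWZ /oneWZ; case: l => /=; congr pair;
  try (apply: functional_extensionality => x; rewrite ?subr0; case: (x == 0));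
  by [].
Qed.

Lemma inv_invl l : inv_letter (inv_letter l) = l.
Proof. by case: l. Qed.

Lemma mul_inv' l : mulWZ (letter_val (inv_letter l)) (letter_val l) = oneWZ.
Proof. by have := mul_inv (inv_letter l); rewrite inv_invl. Qed.

Lemma eval_cat w1 w2 : eval_word (w1 ++ w2) = mulWZ (eval_word w1) (eval_word w2).
Proof.
elim: w1 => [|l w1 IH] /=; first by rewrite mul1W.
by rewrite IH mulWA.
Qed.

Lemma eval_cons l w : eval_word (l :: w) = mulWZ (letter_val l) (eval_word w).
Proof. by []. Qed.

Lemma eval_rcons w l : eval_word (rcons w l) = mulWZ (eval_word w) (letter_val l).
Proof. by rewrite -cats1 eval_cat /= mulW1. Qed.

Definition rr : rel letter := fun x y => y != inv_letter x.

Lemma reducedP w : reduced w <-> sorted rr w.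
Proof.
case: w => [|x p] /=; first by split => // _ i.
split.
- move=> H; apply/(pathP La) => i Hi; apply/eqP => E.
  by apply: (H i) => //; rewrite /= E.
- move/(pathP La) => H i Hi; apply/eqP; exact: H.
Qed.

Definition Pal (g : WZ) := exists w, sorted rr w /\ rev w = w /\ eval_word w = g.

Lemma Pal_is g : Pal g -> is_palindrome g.
Proof. by case=> w [h1 [h2 h3]]; exists w; split; [apply/reducedP|split=> //; rewrite h3]. Qed.

Lemma Pal_sand l g : Pal g -> Pal (mulWZ (letter_val l) (mulWZ g (letter_val l))).
Proof.
case=> w [Hs [Hr <-]].
case: w Hs Hr => [|y v] Hs Hr.
  exists [:: l; l]; split; first by case: l.
  by split => //=; rewrite mul1W mulW1.
have [Ey|Ny] := eqVneq y (inv_letter l).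
- subst y; case/lastP: v Hs Hr => [|v' z] Hs Hr.
    exists [:: l]; split => //; split => //=.
    by rewrite !mulW1 mulWA mul_inv mul1W.
  move: Hr; rewrite rev_cons rev_rcons /= => -[Ez Hv'].
  subst z; move: Hv' => /rcons_inj [Hv].
  exists v'; split; first by move: Hs => /= ; rewrite rcons_path => /andP [/path_sorted].
  split => //.
  rewrite /= eval_rcons -!mulWA mul_inv' mulW1 !mulWA mul_inv mul1W //.
- exists (l :: rcons (y :: v) l); split.
    rewrite /= rcons_path /=; apply/and3P; split => //.
    have : last y v = y.
      move: Hr; rewrite {1}(lastI y v) rev_rcons => -[E _]; exact: E.
    move=> ->; rewrite /rr; move: Ny; clear; by case: l; case: y.
  split; first by rewrite rev_cons rev_rcons Hr.
  by rewrite eval_cons eval_rcons.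
Qed.

Lemma Pal_eq g g' : Pal g -> g = g' -> Pal g'.
Proof. by move=> H <-. Qed.

Definition dl (c x : int) : int := if x == c then 1 else 0.

Lemma dl_sub c t x : dl c (x - t) = dl (c + t) x.
Proof. by rewrite /dl subr_eq. Qed.

Lemma dl_opp c x : dl c (- x) = dl (- c) x.
Proof. by rewrite /dl eqr_oppLR. Qed.

Lemma dl_ext c x d y : (x = c <-> y = d) -> dl c x = dl d y.
Proof.
move=> H; rewrite /dl; case: eqP => h1; case: eqP => h2 //; exfalso; [apply: h2|apply: h1]; by apply/H.
Qed.

Lemma sorted_nseq l n : sorted rr (nseq n l).
Proof.
case: n => //= n; elim: n => //= n IH.
by rewrite IH andbT /rr; clear; case: l.
Qed.

Lemma Pal_nseq l n : Pal (eval_word (nseq n l)).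
Proof. by exists (nseq n l); rewrite sorted_nseq rev_nseq. Qed.

Lemma Pal_a e : Pal (fun x => e * dl 0 x, 0).
Proof.
have HP : forall n : nat, eval_word (nseq n La) = (fun x => n%:Z * dl 0 x, 0).
  elim=> [|n IH] /=; first by congr pair; apply: functional_extensionality => x; rewrite mul0r.
  rewrite IH /mulWZ /=; congr pair.
  apply: functional_extensionality => x; rewrite subr0 -addn1 PoszD.
  change (dl 0 x + n%:Z * dl 0 x = (n%:Z + 1) * dl 0 x); ring.
have HN : forall n : nat, eval_word (nseq n LaI) = (fun x => - (n%:Z * dl 0 x), 0).
  elim=> [|n IH] /=; first by congr pair; apply: functional_extensionality => x; rewrite mul0r oppr0.
  rewrite IH /mulWZ /=; congr pair.
  apply: functional_extensionality => x; rewrite subr0 -addn1 PoszD.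
  have -> : (if x == 0 then -1 else 0) = - dl 0 x by rewrite /dl; case: (x == 0).
  ring.
case: e => n.
  by apply: Pal_eq (Pal_nseq La n) _; rewrite HP.
apply: Pal_eq (Pal_nseq LaI n.+1) _; rewrite HN NegzE; congr pair.
by apply: functional_extensionality => x; rewrite mulNr.
Qed.

Lemma Pal_b k : Pal (fun _ => 0, k).
Proof.
have HP : forall n : nat, eval_word (nseq n Lb) = (fun _ => 0, n%:Z).
  elim=> [|n IH] //=; rewrite IH /mulWZ /=; congr pair; by rewrite -addn1 PoszD addrC.
have HN : forall n : nat, eval_word (nseq n LbI) = (fun _ => 0, - n%:Z).
  elim=> [|n IH] //=; rewrite IH /mulWZ /=; congr pair; by rewrite -addn1 PoszD opprD addrC.
case: k => n.
  by apply: Pal_eq (Pal_nseq Lb n) _; rewrite HP.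
by apply: Pal_eq (Pal_nseq LbI n.+1) _; rewrite HN NegzE.
Qed.

Lemma dlI0 x : (if x == 0 then -1 else 0) = - dl 0 x.
Proof. by rewrite /dl; case: (x == 0). Qed.

Lemma sand_a f k : mulWZ (letter_val La) (mulWZ (f, k) (letter_val La))
  = (fun x => f x + dl 0 x + dl k x, k).
Proof.
rewrite /mulWZ /=; congr pair; last by rewrite add0r addr0.
apply: functional_extensionality => x; rewrite !subr0.
change (dl 0 x + (f x + dl 0 (x - k)) = f x + dl 0 x + dl k x).
rewrite dl_sub add0r; ring.
Qed.

Lemma sand_aI f k : mulWZ (letter_val LaI) (mulWZ (f, k) (letter_val LaI))
  = (fun x => f x - dl 0 x - dl k x, k).
Proof.
rewrite /mulWZ /=; congr pair; last by rewrite add0r addr0.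
apply: functional_extensionality => x; rewrite !subr0 !dlI0 dl_sub add0r; ring.
Qed.

Lemma sand_b f k : mulWZ (letter_val Lb) (mulWZ (f, k) (letter_val Lb))
  = (fun x => f (x - 1), k + 2).
Proof.
rewrite /mulWZ /=; congr pair; last by ring.
by apply: functional_extensionality => x; rewrite add0r addr0.
Qed.

Lemma sand_bI f k : mulWZ (letter_val LbI) (mulWZ (f, k) (letter_val LbI))
  = (fun x => f (x + 1), k - 2).
Proof.
rewrite /mulWZ /=; congr pair; last by ring.
by apply: functional_extensionality => x; rewrite add0r addr0 opprK.
Qed.

Lemma Pal_asand e f k : Pal (f, k) -> Pal (fun x => f x + e * dl 0 x + e * dl k x, k).
Proof.
move=> H.
have HP : forall n : nat, Pal (fun x => f x + n%:Z * dl 0 x + n%:Z * dl k x, k).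
  elim=> [|n IH].
    by apply: Pal_eq H _; congr pair; apply: functional_extensionality => x; rewrite !mul0r !addr0.
  apply: Pal_eq (Pal_sand La IH) _; rewrite sand_a; congr pair.
  by apply: functional_extensionality => x; rewrite -addn1 PoszD; ring.
have HN : forall n : nat, Pal (fun x => f x - n%:Z * dl 0 x - n%:Z * dl k x, k).
  elim=> [|n IH].
    by apply: Pal_eq H _; congr pair; apply: functional_extensionality => x; rewrite !mul0r !subr0.
  apply: Pal_eq (Pal_sand LaI IH) _; rewrite sand_aI; congr pair.
  by apply: functional_extensionality => x; rewrite -addn1 PoszD; ring.
case: e => n; first exact: HP.
apply: Pal_eq (HN n.+1) _; rewrite NegzE; congr pair.
by apply: functional_extensionality => x; ring.
Qed.

Lemma Pal_bsand z f k : Pal (f, k) -> Pal (fun x => f (x - z), k + z + z).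
Proof.
move=> H.
have HP : forall n : nat, Pal (fun x => f (x - n%:Z), k + n%:Z + n%:Z).
  elim=> [|n IH].
    by apply: Pal_eq H _; congr pair; [apply: functional_extensionality => x; rewrite subr0|rewrite !addr0].
  apply: Pal_eq (Pal_sand Lb IH) _; rewrite sand_b; have -> : (n.+1)%:Z = n%:Z + 1 by rewrite -addn1 PoszD.
  congr pair; last by ring.
  by apply: functional_extensionality => x; congr f; ring.
have HN : forall n : nat, Pal (fun x => f (x + n%:Z), k - n%:Z - n%:Z).
  elim=> [|n IH].
    by apply: Pal_eq H _; congr pair; [apply: functional_extensionality => x; rewrite addr0|rewrite !subr0].
  apply: Pal_eq (Pal_sand LbI IH) _; rewrite sand_bI; have -> : (n.+1)%:Z = n%:Z + 1 by rewrite -addn1 PoszD.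
  congr pair; last by ring.
  by apply: functional_extensionality => x; congr f; ring.
case: z => n; first exact: HP.
apply: Pal_eq (HN n.+1) _; rewrite NegzE.
congr pair; try (apply: functional_extensionality => x; congr f); ring.
Qed.

Lemma Pal_op t e f k : Pal (f, k) ->
  Pal (fun x => f x + e * dl t x + e * dl (k - t) x, k).
Proof.
move=> H.
have := Pal_bsand t (Pal_asand e (Pal_bsand (- t) H)).
move/Pal_eq; apply; congr pair; last by ring.
apply: functional_extensionality => x; rewrite !dl_sub.
have -> : x - t - - t = x by ring.
have -> : 0 + t = t by ring.
have -> : k + - t + - t + t = k - t by ring.
by [].
Qed.

Definition bnd (M : nat) (s : int -> int) := forall z : int, (M < `|z|)%N -> s z = 0.

Lemma Pal0 N s : (forall x, s (- x) = s x) -> bnd N s -> Pal (s, 0).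
Proof.
elim: N s => [|N IH] s Hs Hb.
  apply: Pal_eq (Pal_a (s 0)) _; congr pair; apply: functional_extensionality => x.
  rewrite /dl; case: eqP => [->|h]; first by ring.
  rewrite mulr0 Hb //; lia.
pose c : int := N.+1%:Z; pose e := s c.
pose s' := fun x => s x - e * dl c x - e * dl (- c) x.
have H' : Pal (s', 0).
  apply: IH.
    move=> x; rewrite /s' !dl_opp opprK Hs; ring.
  move=> z hz; rewrite /s' /dl /e.
  case: eqP => h1; case: eqP => h2.
  - rewrite /c in h1 h2; lia.
  - rewrite h1; ring.
  - rewrite h2 Hs; ring.
  - rewrite Hb; [ring|rewrite /c in h1 h2; lia].
apply: Pal_eq (Pal_op c e H') _; congr pair.
apply: functional_extensionality => x; rewrite sub0r /s'; ring.
Qed.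

Lemma Pal1 N s : (forall x, s (1 - x) = s x) -> bnd N s -> Pal (s, 1).
Proof.
elim: N s => [|N IH] s Hs Hb.
  apply: Pal_eq (Pal_b 1) _; congr pair; apply: functional_extensionality => x.
  have [->|h] := eqVneq x 0.
    by rewrite -Hs Hb.
  by rewrite Hb //; move/eqP: h => h; lia.
pose c : int := N.+1%:Z; pose e := s c.
pose s' := fun x => s x - e * dl c x - e * dl (1 - c) x.
have H' : Pal (s', 1).
  apply: IH.
    move=> x; rewrite /s' Hs.
    rewrite (@dl_ext c (1 - x) (1 - c) x); last by split; lia.
    rewrite (@dl_ext (1 - c) (1 - x) c x); last by split; lia.
    ring.
  move=> z hz; rewrite /s' /dl /e.
  case: eqP => h1; case: eqP => h2.
  - rewrite /c in h1 h2; lia.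
  - rewrite h1; ring.
  - rewrite h2 Hs; ring.
  - have [h3|h3] := eqVneq z (- c).
      rewrite -Hs Hb; [ring|rewrite h3 /c; lia].
    rewrite Hb; [ring|move/eqP: h3 => h3; rewrite /c in h1 h2 h3; lia].
apply: Pal_eq (Pal_op c e H') _; congr pair.
apply: functional_extensionality => x; rewrite /s'; ring.
Qed.

Definition V (f : int -> int) := exists s1 s2 M,
  [/\ (forall x, s1 (- x) = s1 x), (forall x, s2 (1 - x) = s2 x),
      bnd M s1, bnd M s2 & forall x, f x = s1 x + s2 x].

Lemma bnd_mono M M' s : bnd M s -> (M <= M')%N -> bnd M' s.
Proof. move=> H h z hz; apply: H; lia. Qed.

Lemma V_ext f g : V f -> (forall x, f x = g x) -> V g.
Proof.
case=> s1 [s2 [M [h1 h2 h3 h4 h5]]] E; exists s1, s2, M; split => // x.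
by rewrite -E.
Qed.

Lemma V_add f g : V f -> V g -> V (fun x => f x + g x).
Proof.
case=> s1 [s2 [M [h1 h2 h3 h4 h5]]]; case=> t1 [t2 [M' [k1 k2 k3 k4 k5]]].
exists (fun x => s1 x + t1 x), (fun x => s2 x + t2 x), (maxn M M'); split.
- by move=> x; rewrite h1 k1.
- by move=> x; rewrite h2 k2.
- move=> z hz; rewrite h3 ?k3; [by rewrite addr0| |]; lia.
- move=> z hz; rewrite h4 ?k4; [by rewrite addr0| |]; lia.
- by move=> x; rewrite h5 k5; ring.
Qed.

Lemma V_scale e f : V f -> V (fun x => e * f x).
Proof.
case=> s1 [s2 [M [h1 h2 h3 h4 h5]]].
exists (fun x => e * s1 x), (fun x => e * s2 x), M; split.
- by move=> x; rewrite h1.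
- by move=> x; rewrite h2.
- by move=> z hz; rewrite h3 // mulr0.
- by move=> z hz; rewrite h4 // mulr0.
- by move=> x; rewrite h5; ring.
Qed.

Lemma V_pair0 c : V (fun x => dl c x + dl (- c) x).
Proof.
exists (fun x => dl c x + dl (- c) x), (fun _ => 0), `|c|%N; split => //.
- by move=> x; rewrite !dl_opp opprK addrC.
- move=> z hz; rewrite /dl; case: eqP => h1; case: eqP => h2 //; lia.
- by move=> x; rewrite addr0.
Qed.

Lemma V_pair1 c : V (fun x => dl c x + dl (1 - c) x).
Proof.
exists (fun _ => 0), (fun x => dl c x + dl (1 - c) x), (`|c| + 1)%N; split => //.
- move=> x.
  rewrite (@dl_ext c (1 - x) (1 - c) x); last by split; lia.
  rewrite (@dl_ext (1 - c) (1 - x) c x); last by split; lia.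
  by rewrite addrC.
- move=> z hz; rewrite /dl; case: eqP => h1; case: eqP => h2 //; lia.
- by move=> x; rewrite add0r.
Qed.

Lemma V_up c : V (dl c) -> V (dl (c + 1)).
Proof.
move=> H.
apply: V_ext (V_add (V_add H (V_scale (-1) (V_pair0 c))) (V_scale 1 (V_pair1 (- c)))) _.
move=> x; have -> : 1 - - c = c + 1 by ring.
ring.
Qed.

Lemma V_down c : V (dl (c + 1)) -> V (dl c).
Proof.
move=> H.
apply: V_ext (V_add (V_add H (V_scale 1 (V_pair0 c))) (V_scale (-1) (V_pair1 (- c)))) _.
move=> x; have -> : 1 - - c = c + 1 by ring.
ring.
Qed.

Lemma V_dl0 : V (dl 0).
Proof.
exists (dl 0), (fun _ => 0), 0%N; split => //.
- by move=> x; rewrite dl_opp oppr0.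
- move=> z hz; rewrite /dl; case: eqP => h //; lia.
- by move=> x; rewrite addr0.
Qed.

Lemma V_dl c : V (dl c).
Proof.
case: c => n.
  elim: n => [|n IH]; first exact: V_dl0.
  rewrite (_ : Posz n.+1 = n%:Z + 1); [exact: V_up | by rewrite -addn1 PoszD].
have H : forall n : nat, V (dl (- n%:Z)).
  elim=> [|m IH]; first by rewrite oppr0; exact: V_dl0.
  apply: V_down; rewrite (_ : - (m.+1)%:Z + 1 = - m%:Z) //.
  rewrite -addn1 PoszD; ring.
by rewrite NegzE; apply: H.
Qed.

Lemma V_bnd N f : bnd N f -> V f.
Proof.
elim: N f => [|N IH] f Hb.
  apply: V_ext (V_scale (f 0) V_dl0) _ => x.
  rewrite /dl; case: eqP => [->|h]; first by ring.
  rewrite mulr0 Hb //; lia.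
pose c : int := N.+1%:Z.
pose g := fun x => f x - f c * dl c x - f (- c) * dl (- c) x.
have Hg : V g.
  apply: IH => z hz; rewrite /g /dl.
  case: eqP => h1; case: eqP => h2.
  - rewrite /c in h1 h2; lia.
  - rewrite h1; ring.
  - rewrite h2; ring.
  - rewrite Hb; [ring|rewrite /c in h1 h2; lia].
apply: V_ext (V_add (V_add Hg (V_scale (f c) (V_dl c))) (V_scale (f (- c)) (V_dl (- c)))) _.
move=> x; rewrite /g; ring.
Qed.

Theorem corollary5p5 : pw_le 3.
Proof.
move=> [f n] [N HN].
have [s1 [s2 [M [h1 h2 h3 h4 h5]]]] := V_bnd HN.
exists [:: (s1, 0); (s2, 1); (fun _ => 0, n - 1)]; split => //; split.
  move=> [|[|[|i]]] // _; apply: Pal_is.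
  - by apply: (Pal0 h1 h3).
  - by apply: (Pal1 h2 h4).
  - exact: Pal_b.
rewrite /eqWZ /mulWZ /=; split; last by ring.
move=> z /=; rewrite -/((f, n).1 z) h5 subr0 !addr0 //.
Qed.
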